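(* Let $P$ be a generic set of $n$ points in convex position in the plane. If each point of $P$ is colored red or blue independently and uniformly at random, giving $P=R\cup B$, then $\mathbb{E}[\operatorname{cr}(R,B)]\ge n/4-1$.
   Context: A finite planar point set is generic if no three of its points are collinear and every subset has a unique Euclidean minimum spanning tree (MST). For a generic set $X$, $T_X$ denotes its MST, drawn with straight-line edges. For disjoint $R,B$ with $R\cup B$ generic, $\operatorname{cr}(R,B)$ is the number of crossings between the edges of $T_R$ and the edges of $T_B$. *)

(* Defs.v *)
From mathcomp Require Import all_boot all_order all_algebra.
From mathcomp Require Import boolp reals.
Set Implicit Arguments. Unset Strict Implicit. Unset Printing Implicit Defensive.
Import Order.TTheory GRing.Theory Num.Theory.
Local Open Scope ring_scope.

Section Defs.
Variable R : realType.
Variable n : nat.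
Variable p : 'I_n -> R * R.

Definition dist (a b : R * R) : R :=
  Num.sqrt ((a.1 - b.1) ^+ 2 + (a.2 - b.2) ^+ 2).

Definition collinear (a b c : R * R) : bool :=
  (b.1 - a.1) * (c.2 - a.2) - (b.2 - a.2) * (c.1 - a.1) == 0.

(* Edges are pairs (i, j) of point indices with i < j. *)
Definition edge_rel (E : {set 'I_n * 'I_n}) : rel 'I_n :=
  fun x y => ((x, y) \in E) || ((y, x) \in E).

Definition is_spanning_tree (S : {set 'I_n}) (E : {set 'I_n * 'I_n}) : Prop :=
  [/\ forall e, e \in E -> [/\ e.1 \in S, e.2 \in S & (e.1 < e.2)%N],
      forall x y, x \in S -> y \in S -> connect (edge_rel E) x y &
      forall e, e \in E -> ~~ connect (edge_rel (E :\ e)) e.1 e.2].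

Definition weight (E : {set 'I_n * 'I_n}) : R :=
  \sum_(e in E) dist (p e.1) (p e.2).

Definition is_mst (S : {set 'I_n}) (E : {set 'I_n * 'I_n}) : Prop :=
  is_spanning_tree S E /\
  forall E', is_spanning_tree S E' -> weight E <= weight E'.

Definition generic : Prop :=
  (forall i j k : 'I_n, i != j -> j != k -> i != k ->
     ~~ collinear (p i) (p j) (p k)) /\
  (forall (S : {set 'I_n}) E1 E2, is_mst S E1 -> is_mst S E2 -> E1 = E2).

Definition convex_position : Prop :=
  forall i : 'I_n, ~ exists lam : 'I_n -> R,
    [/\ forall j, 0 <= lam j, lam i = 0, \sum_j lam j = 1 &
        p i = (\sum_j lam j * (p j).1, \sum_j lam j * (p j).2)].

Definition seg_meet (a b c d : R * R) : Prop :=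
  exists s t : R, [/\ 0 <= s <= 1, 0 <= t <= 1,
    (1 - s) * a.1 + s * b.1 = (1 - t) * c.1 + t * d.1 &
    (1 - s) * a.2 + s * b.2 = (1 - t) * c.2 + t * d.2].

Definition cr (E1 E2 : {set 'I_n * 'I_n}) : nat :=
  #|[set ef : ('I_n * 'I_n) * ('I_n * 'I_n) |
      [&& ef.1 \in E1, ef.2 \in E2 &
          `[< seg_meet (p ef.1.1) (p ef.1.2) (p ef.2.1) (p ef.2.2) >]]]|.

End Defs.

(* Main.v *)
Require Import Defs.
From mathcomp Require Import all_boot all_order all_algebra.
From mathcomp Require Import boolp reals.
From mathcomp Require Import ring lra zify.
Import Order.TTheory GRing.Theory Num.Theory.
Set Implicit Arguments. Unset Strict Implicit.
Local Open Scope ring_scope.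

Definition orient (R : realType) (a b c : R * R) : R :=
  (b.1 - a.1) * (c.2 - a.2) - (b.2 - a.2) * (c.1 - a.1).

Lemma orient_cycl (R : realType) (a b c : R * R) : orient a b c = orient b c a.
Proof. rewrite /orient; ring. Qed.
Lemma orient_swap (R : realType) (a b c : R * R) : orient a c b = - orient a b c.
Proof. rewrite /orient; ring. Qed.

Lemma seg_meet_sym (R : realType) (a b c d : R * R) : seg_meet a b c d -> seg_meet c d a b.
Proof. by case=> s [t [hs ht e1 e2]]; exists t, s; split. Qed.

Lemma seg_meet_rev (R : realType) (a b c d : R * R) : seg_meet a b c d -> seg_meet b a c d.
Proof.
case=> s [t [/andP[s0 s1] ht e1 e2]]; exists (1 - s), t; split => //.
- apply/andP; split; lra.
- by rewrite -e1; ring.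
- by rewrite -e2; ring.
Qed.

Lemma seg_meet_rev2 (R : realType) (a b c d : R * R) : seg_meet a b c d -> seg_meet a b d c.
Proof. by move=> /seg_meet_sym /seg_meet_rev /seg_meet_sym. Qed.

Lemma cross4 (R : realType) (A B C D : R * R) :
  0 < orient A B C -> 0 < orient A B D -> 0 < orient A C D -> 0 < orient B C D ->
  seg_meet A C B D.
Proof.
move=> h1 h2 h3 h4.
have E : orient A B D + orient B C D = orient A B C + orient A C D by rewrite /orient; ring.
have n1 : orient A B D + orient B C D != 0 by rewrite gt_eqF // addr_gt0.
exists (orient A B D / (orient A B D + orient B C D)),
       (orient A B C / (orient A B D + orient B C D)); split.
- apply/andP; split; first by rewrite divr_ge0 // ltW // addr_gt0.
  rewrite ler_pdivrMr; [lra | exact: addr_gt0].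
- apply/andP; split; first by rewrite divr_ge0 // ltW // addr_gt0.
  rewrite ler_pdivrMr; [lra | exact: addr_gt0].
- move: n1; case: A B C D {h1 h2 h3 h4 E} => [a1 a2] [b1 b2] [c1 c2] [d1 d2] /= n1.
  by rewrite /orient /= in n1 *; field.
- move: n1; case: A B C D {h1 h2 h3 h4 E} => [a1 a2] [b1 b2] [c1 c2] [d1 d2] /= n1.
  by rewrite /orient /= in n1 *; field.
Qed.

Lemma bary (R : realType) (A B C P : R * R) : orient A B C != 0 ->
  [/\ P.1 = orient P B C / orient A B C * A.1 + orient A P C / orient A B C * B.1
            + orient A B P / orient A B C * C.1,
      P.2 = orient P B C / orient A B C * A.2 + orient A P C / orient A B C * B.2
            + orient A B P / orient A B C * C.2 &
      orient P B C / orient A B C + orient A P C / orient A B C + orient A B P / orient A B C = 1].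
Proof.
case: A B C P => [a1 a2] [b1 b2] [c1 c2] [d1 d2]; rewrite /orient /= => n.
by split; field.
Qed.

Lemma ang_trans (R : realType) (O X Y Z : R * R) :
  (O.1 < X.1 \/ (O.1 = X.1 /\ O.2 < X.2)) ->
  (O.1 < Y.1 \/ (O.1 = Y.1 /\ O.2 < Y.2)) ->
  (O.1 < Z.1 \/ (O.1 = Z.1 /\ O.2 < Z.2)) ->
  0 < orient O X Y -> 0 < orient O Y Z -> orient O X Z != 0 -> 0 < orient O X Z.
Proof.
case: O X Y Z => [o1 o2] [x1 x2] [y1 y2] [z1 z2]; rewrite /orient /=.
set k := (x1 - o1) * (z2 - o2) - (x2 - o2) * (z1 - o1).
set a := (y1 - o1) * (z2 - o2) - (y2 - o2) * (z1 - o1).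
set b := (x1 - o1) * (y2 - o2) - (x2 - o2) * (y1 - o1).
have e1 : k * (y1 - o1) = a * (x1 - o1) + b * (z1 - o1) by rewrite /k /a /b; ring.
have e2 : k * (y2 - o2) = a * (x2 - o2) + b * (z2 - o2) by rewrite /k /a /b; ring.
move=> hx hy hz hb ha hk.
rewrite lt_neqAle eq_sym hk /=; rewrite leNgt; apply/negP => kn.
move: e1 e2; clearbody k a b.
case: hy => [hy|[hy1 hy2]].
- have : k * (y1 - o1) < 0 by rewrite pmulr_llt0 ?subr_gt0 //.
  have : 0 <= a * (x1 - o1) by case: hx => [h|[<- _]]; [rewrite mulr_ge0 ?subr_ge0 ?ltW | rewrite subrr mulr0].
  have : 0 <= b * (z1 - o1) by case: hz => [h|[<- _]]; [rewrite mulr_ge0 ?subr_ge0 ?ltW | rewrite subrr mulr0].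
  move=> *; lra.
- rewrite -hy1 subrr mulr0 => e1 e2.
  have hx1 : x1 = o1.
    case: hx => [h|[]]; last by [].
    have : 0 < a * (x1 - o1) by rewrite mulr_gt0 ?subr_gt0.
    have : 0 <= b * (z1 - o1) by case: hz => [h'|[<- _]]; [rewrite mulr_ge0 ?subr_ge0 ?ltW | rewrite subrr mulr0].
    move=> *; lra.
  have hz1 : z1 = o1.
    case: hz => [h|[]]; last by [].
    have : 0 < b * (z1 - o1) by rewrite mulr_gt0 ?subr_gt0.
    move: e1; rewrite hx1 subrr mulr0 => *; lra.
  have hx2 : o2 < x2 by case: hx => [|[]]; [rewrite hx1 ltxx | ].
  have hz2 : o2 < z2 by case: hz => [|[]]; [rewrite hz1 ltxx | ].
  have : k * (y2 - o2) < 0 by rewrite pmulr_llt0 ?subr_gt0.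
  have : 0 < a * (x2 - o2) by rewrite mulr_gt0 ?subr_gt0.
  have : 0 < b * (z2 - o2) by rewrite mulr_gt0 ?subr_gt0.
  move=> *; lra.
Qed.


Lemma sum_pick (R : realType) (n : nat) (a : 'I_n) (F : 'I_n -> R) :
  \sum_(x : 'I_n) (x == a)%:R * F x = F a.
Proof.
rewrite (bigD1 a) //= eqxx mul1r big1 ?addr0 // => x /negbTE ->.
by rewrite mul0r.
Qed.

Lemma no_inside (R : realType) (n : nat) (p : 'I_n -> R * R) (a b c j : 'I_n) :
  convex_position p -> j != a -> j != b -> j != c ->
  0 < orient (p a) (p b) (p c) -> 0 < orient (p j) (p b) (p c) ->
  0 < orient (p a) (p j) (p c) -> 0 < orient (p a) (p b) (p j) -> False.
Proof.
move=> cp ja jb jc h0 h1 h2 h3.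
have [e1 e2 e3] := bary (p j) (lt0r_neq0 h0).
set D := orient (p a) (p b) (p c) in e1 e2 e3.
set al := orient (p j) (p b) (p c) / D in e1 e2 e3.
set be := orient (p a) (p j) (p c) / D in e1 e2 e3.
set ga := orient (p a) (p b) (p j) / D in e1 e2 e3.
have hal : 0 < al by rewrite divr_gt0.
have hbe : 0 < be by rewrite divr_gt0.
have hga : 0 < ga by rewrite divr_gt0.
apply: (cp j).
exists (fun x => al * (x == a)%:R + be * (x == b)%:R + ga * (x == c)%:R); split.
- move=> x; rewrite !addr_ge0 // mulr_ge0 // ltW //.
- by rewrite (negbTE ja) (negbTE jb) (negbTE jc) !mulr0 !addr0.
- rewrite !big_split /= -!mulr_sumr.
  have H (y : 'I_n) : \sum_(x : 'I_n) (x == y)%:R = 1 :> R.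
    by rewrite -[RHS](sum_pick y (fun _ => 1)); apply: eq_bigr => x _; rewrite mulr1.
  by rewrite !H !mulr1.
- have H (y : 'I_n) (F : 'I_n -> R) (k : R) :
      \sum_(x : 'I_n) (k * (x == y)%:R) * F x = k * F y.
    by rewrite -sum_pick mulr_sumr; apply: eq_bigr => x _; rewrite mulrA.
  have H2 (F : 'I_n -> R) : \sum_(x : 'I_n) (al * (x == a)%:R + be * (x == b)%:R + ga * (x == c)%:R) * F x
     = al * F a + be * F b + ga * F c.
    by rewrite -!H -!big_split; apply: eq_bigr => x _ /=; ring.
  by rewrite (H2 (fun x => (p x).1)) (H2 (fun x => (p x).2)) -e1 -e2; case: (p j).
Qed.


Definition NCol (R : realType) (n : nat) (p : 'I_n -> R * R) :=
  forall i j k : 'I_n, i != j -> j != k -> i != k -> orient (p i) (p j) (p k) != 0.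

Definition HPl (R : realType) (n : nat) (p : 'I_n -> R * R) (o : 'I_n) :=
  forall j, j != o -> ((p o).1 < (p j).1 \/ ((p o).1 = (p j).1 /\ (p o).2 < (p j).2)).

Definition prec (R : realType) (n : nat) (p : 'I_n -> R * R) (o x y : 'I_n) : bool :=
  if x == o then y != o else (y != o) && (0 < orient (p o) (p x) (p y)).

Lemma orient_xx (R : realType) (a b : R * R) : orient a b b = 0.
Proof. rewrite /orient; ring. Qed.

Lemma prec_irr (R : realType) (n : nat) (p : 'I_n -> R * R) o x : ~~ prec p o x x.
Proof. by rewrite /prec; case: ifP => [->|_] //; rewrite orient_xx ltxx andbF. Qed.

Lemma prec_total (R : realType) (n : nat) (p : 'I_n -> R * R) o x y :
  NCol p -> x != y -> prec p o x y || prec p o y x.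
Proof.
move=> nc xy; rewrite /prec.
have [xo|xo] := eqVneq x o; have [yo|yo] := eqVneq y o => //=.
all: try by rewrite xo yo eqxx in xy.
all: try by rewrite -xo eq_sym xy.
have h := nc o x y ltac:(by rewrite eq_sym) xy ltac:(by rewrite eq_sym).
  rewrite orient_swap oppr_gt0.
  by rewrite -neq_lt; rewrite orient_swap oppr_eq0 in h.
Qed.

Lemma prec_trans (R : realType) (n : nat) (p : 'I_n -> R * R) o x y z :
  NCol p -> HPl p o -> prec p o x y -> prec p o y z -> prec p o x z.
Proof.
move=> nc hp; rewrite /prec.
case: (eqVneq x o) => [_|xo].
  by move=> yo; rewrite (negbTE yo) => /andP[-> _].
move=> /andP[yo h1]; rewrite (negbTE yo) => /andP[zo h2]; rewrite zo /=.
  have xz : x != z.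
    apply/eqP => exz; move: h2; rewrite -exz orient_swap oppr_gt0 => h2.
    by have := lt_trans h1 h2; rewrite ltxx.
  apply: ang_trans (hp _ xo) (hp _ yo) (hp _ zo) h1 h2 _.
  by apply: nc; rewrite // eq_sym.
Qed.

Definition rk (R : realType) (n : nat) (p : 'I_n -> R * R) (o x : 'I_n) : nat :=
  #|[set y | prec p o y x]|.

Lemma rk_lt (R : realType) (n : nat) (p : 'I_n -> R * R) o x y :
  NCol p -> HPl p o -> prec p o x y -> (rk p o x < rk p o y)%N.
Proof.
move=> nc hp hxy; apply: proper_card; apply/properP; split.
- by apply/subsetP => z; rewrite !inE => h; apply: prec_trans hxy.
- by exists x; rewrite !inE // prec_irr.
Qed.

Lemma rk_ltE (R : realType) (n : nat) (p : 'I_n -> R * R) o x y :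
  NCol p -> HPl p o -> (rk p o x < rk p o y)%N -> prec p o x y.
Proof.
move=> nc hp h; have [exy|nxy] := eqVneq x y; first by rewrite exy ltnn in h.
case/orP: (prec_total o nc nxy) => // /(rk_lt nc hp) h'.
by have := ltn_trans h h'; rewrite ltnn.
Qed.

Lemma rk_bound (R : realType) (n : nat) (p : 'I_n -> R * R) o x : (rk p o x < n)%N.
Proof.
have h : (#|[set y | prec p o y x]| < #|'I_n|)%N.
  apply: proper_card; apply/properP; split; first exact: subset_predT.
  by exists x => //; rewrite inE prec_irr.
by rewrite card_ord in h.
Qed.

Lemma rk_inj (R : realType) (n : nat) (p : 'I_n -> R * R) o :
  NCol p -> HPl p o -> injective (rk p o).
Proof.
move=> nc hp x y e; apply/eqP; apply/negPn/negP => nxy.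
by case/orP: (prec_total o nc nxy) => /(rk_lt nc hp); rewrite e ltnn.
Qed.

Lemma rk_conv (R : realType) (n : nat) (p : 'I_n -> R * R) o x y z :
  NCol p -> HPl p o -> convex_position p ->
  (rk p o x < rk p o y)%N -> (rk p o y < rk p o z)%N -> 0 < orient (p x) (p y) (p z).
Proof.
move=> nc hp cp h1 h2.
have pxy := rk_ltE nc hp h1; have pyz := rk_ltE nc hp h2.
have pxz := prec_trans nc hp pxy pyz.
have nxy : x != y by apply/eqP => e; rewrite e ltnn in h1.
have nyz : y != z by apply/eqP => e; rewrite e ltnn in h2.
have nxz : x != z by apply/eqP => e; rewrite e in pxz; rewrite (negbTE (prec_irr _ _ _)) in pxz.
move: pxy pyz pxz; rewrite /prec.
case: (eqVneq x o) => [->|xo].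
  by move=> yo; rewrite (negbTE yo) => /andP[_ h] _.
move=> /andP[yo a1]; rewrite (negbTE yo) => /andP[zo a2] /andP[_ a3].
have nz := nc x y z nxy nyz nxz.
rewrite lt_neqAle eq_sym nz /= leNgt; apply/negP => neg.
apply: (@no_inside R n p o x z y cp yo _ nyz a3 _ a2 a1); first by rewrite eq_sym.
have -> : orient (p y) (p x) (p z) = - orient (p x) (p y) (p z) by rewrite /orient; ring.
by rewrite oppr_gt0.
Qed.


Lemma lexmin (R : realType) (n : nat) (p : 'I_n -> R * R) (i0 : 'I_n) :
  injective p -> exists o, HPl p o.
Proof.
move=> inj.
case: (@arg_minP _ _ _ i0 predT (fun i => (p i).1) isT) => o1 _ H1.
case: (@arg_minP _ _ _ o1 (fun i => (p i).1 == (p o1).1) (fun i => (p i).2) (eqxx _)) => o /eqP ho H2.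
exists o => j jo.
have [ej|nej] := eqVneq (p j).1 (p o1).1.
- right; split; first by rewrite ho ej.
  rewrite lt_neqAle H2 ?ej // andbT; apply/eqP => e.
  move: jo; rewrite (inj j o) ?eqxx //.
  by move: e ho ej; case: (p j) => a b; case: (p o) => c d /= -> -> ->.
- left; rewrite ho lt_neqAle eq_sym nej /=; exact: H1.
Qed.

Lemma setup (R : realType) (n : nat) (p : 'I_n -> R * R) (i0 : 'I_n) :
  injective p -> NCol p -> convex_position p ->
  exists r : 'I_n -> nat, exists pr : 'I_n -> 'I_n,
    [/\ injective r, forall x, (r x < n)%N,
        forall z, r (pr z) = ((r z + n.-1) %% n)%N &
        forall x y z, (r x < r y)%N -> (r y < r z)%N -> 0 < orient (p x) (p y) (p z)].
Proof.
move=> inj nc cp.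
have [o hp] := lexmin i0 inj.
have n0 : (0 < n)%N by apply: leq_ltn_trans (ltn_ord i0).
pose rko (x : 'I_n) : 'I_n := Ordinal (rk_bound p o x).
have rkoi : injective rko.
  by move=> x y /(congr1 val) /= /(rk_inj nc hp).
have : forall z, exists w, rk p o w = ((rk p o z + n.-1) %% n)%N.
  move=> z; have := inj_card_onto rkoi (leqnn _) (Ordinal (ltn_pmod (rk p o z + n.-1) n0)).
  by case/codomP => w /(congr1 val) /= e; exists w.
case/fin_all_exists => pr hpr.
exists (rk p o), pr; split => //.
- exact: rk_inj.
- exact: rk_bound.
- by move=> x y z; apply: rk_conv.
Qed.

Local Close Scope ring_scope.

Lemma connect_cut (T : finType) (e : rel T) (P : pred T) x y :
  connect e x y -> P x -> ~~ P y -> exists s t, [/\ e s t, P s & ~~ P t].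
Proof.
case/connectP => q pth ey; subst y; move: x pth.
elim: q => [|z q IH] x; move=> pth Px NPy.
  by rewrite /= Px in NPy.
case/andP: pth => exz pth'.
case: (boolP (P z)) => Pz; first exact: (IH z pth' Pz NPy).
by exists x, z.
Qed.

Lemma grow (n : nat) (T' : finType) (S : {set 'I_n}) (E : {set 'I_n * 'I_n}) (f : 'I_n -> T') :
  (forall e, e \in E -> e.1 \in S /\ e.2 \in S) ->
  (forall x y, x \in S -> y \in S -> connect (edge_rel E) x y) ->
  #|f @: S| <= #|[set e in E | f e.1 != f e.2]|.+1.
Proof.
move=> hE hC.
have claim : forall k, k < #|f @: S| -> exists L : {set T'},
   [/\ L \subset f @: S, #|L| = k.+1 &
       k <= #|[set e in E | [&& f e.1 != f e.2, f e.1 \in L & f e.2 \in L]]|].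
  elim=> [|k IH] hk.
    have [l hl] : exists l, l \in f @: S.
      by apply/set0Pn; rewrite -card_gt0.
    by exists [set l]; rewrite sub1set hl cards1.
  have [L [sL cL kL]] := IH (ltnW hk).
  have : L \proper f @: S by rewrite properEcard sL cL.
  case/properP => _ [l /imsetP [y yS ->] nl].
  have [l0 l0L] : exists l0, l0 \in L by apply/set0Pn; rewrite -card_gt0 cL.
  have /imsetP [x xS ex] := subsetP sL _ l0L.
  have [s [t [est Ps Pt]]] := connect_cut (P := fun z => f z \in L) (hC x y xS yS)
     ltac:(by rewrite /= -ex) nl.
  have tS : t \in S by case/orP: est => /hE [].
  have [e0 [e0E ed e1 e2 nold]] : exists e0, [/\ e0 \in E, f e0.1 != f e0.2,
       f e0.1 \in f t |: L, f e0.2 \in f t |: L & f e0.1 \notin L \/ f e0.2 \notin L].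
    have ne : f s != f t by apply/eqP => e; rewrite -e Ps in Pt.
    case/orP: est => h.
    - exists (s, t); split => //=; rewrite ?in_setU1 ?eqxx ?Ps ?orbT //; by right.
    - exists (t, s); split => //=; rewrite ?in_setU1 ?eqxx ?Ps ?orbT // 1?eq_sym //; by left.
  exists (f t |: L); split.
  - apply/subsetP => a; rewrite in_setU1 => /orP[/eqP-> | aL]; last exact: (subsetP sL).
    by apply/imsetP; exists t.
  - by rewrite cardsU1 Pt cL.
  - apply: leq_ltn_trans kL _; apply: proper_card; apply/properP; split.
      apply/subsetP => e; rewrite !inE => /and4P[-> -> h1 h2].
      by rewrite h1 h2 !orbT.
    exists e0; first by rewrite inE e0E ed e1 e2.
    by rewrite inE e0E ed /=; case: nold => /negbTE ->; rewrite ?andbF.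
case: (posnP #|f @: S|) => [->|h] //.
have [L [_ _ kL]] := claim #|f @: S|.-1 ltac:(by rewrite ltn_predL).
rewrite -(ltn_predK h) ltnS; apply: leq_trans kL _.
by apply: subset_leq_card; apply/subsetP => e; rewrite !inE => /and4P[-> -> _ _].
Qed.


Definition good (R : realType) (n : nat) (p : 'I_n -> R * R) (r : 'I_n -> nat) (pr : 'I_n -> 'I_n) :=
  [/\ injective r, forall x, r x < n, forall z, r (pr z) = (r z + n.-1) %% n &
      forall x y z, r x < r y -> r y < r z -> (0 < orient (p x) (p y) (p z))%R].

Lemma modn_wrap m n : m < n.*2 -> m %% n = if m < n then m else m - n.
Proof.
move=> h; case: ltnP => h2; first by rewrite modn_small.
rewrite -{1}(subnK h2) modnDr modn_small //; lia.
Qed.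

Lemma rot_cases a b c s n : a < n -> b < n -> c < n -> s <= n ->
  (a + s) %% n < (b + s) %% n -> (b + s) %% n < (c + s) %% n ->
  [\/ a < b < c, b < c < a | c < a < b].
Proof.
move=> ha hb hc hs.
rewrite !modn_wrap; try lia.
case: (ltnP (a + s) n); case: (ltnP (b + s) n); case: (ltnP (c + s) n) => *.
all: first [ by constructor 1; lia | by constructor 2; lia | by constructor 3; lia | lia ].
Qed.

Lemma rotate (R : realType) (n : nat) (p : 'I_n -> R * R) r pr (z0 : 'I_n) :
  good p r pr -> good p (fun x => (r x + (n - r z0)) %% n) pr /\ (r z0 + (n - r z0)) %% n = 0.
Proof.
case=> ri rb rp rc.
have n0 : 0 < n by apply: leq_ltn_trans (ltn_ord z0).
split; last by rewrite subnKC ?modnn // ltnW.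
split.
- move=> x y /eqP; rewrite eqn_modDr !modn_small // => /eqP; exact: ri.
- by move=> x; rewrite ltn_pmod.
- move=> z; rewrite rp modnDml [in RHS]modnDml; congr (_ %% _); lia.
- move=> x y z h1 h2.
  have := rot_cases (rb x) (rb y) (rb z) (leq_subr _ _) h1 h2.
  case=> /andP[a1 a2]; first exact: rc.
  + by rewrite orient_cycl; apply: rc.
  + by rewrite -orient_cycl; apply: rc.
Qed.


Lemma main_det (R : realType) (n : nat) (p : 'I_n -> R * R) r pr (c : 'I_n -> bool)
    (ER EB : {set 'I_n * 'I_n}) (z0 : 'I_n) :
  good p r pr -> c z0 -> ~~ c (pr z0) -> r z0 = 0 ->
  is_spanning_tree [set i | c i] ER -> is_spanning_tree [set i | ~~ c i] EB ->
  #|[set z | c z && ~~ c (pr z)]| <= (cr p ER EB).+1.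
Proof.
move=> [ri rb rp rc] cz0 ncz0 rz0 [hER cER _] [hEB cEB _].
set Tr := [set z | c z && ~~ c (pr z)].
pose Lset (y : 'I_n) := [set z in Tr | r z <= r y].
pose L (y : 'I_n) : 'I_n.+1 := inord #|Lset y|.
have Lval y : (L y : nat) = #|Lset y|.
  by rewrite inordK // ltnS; apply: leq_trans (max_card _) _; rewrite card_ord.
have Lsub x y : r x <= r y -> Lset x \subset Lset y.
  move=> h; apply/subsetP => z; rewrite !inE => /andP[-> h2] /=; exact: leq_trans h2 h.
have stepC : #|Tr| <= #|L @: [set i | c i]|.
  have inj : {in Tr &, injective L}.
    move=> z1 z2 h1 h2 e; apply: ri; apply/eqP; apply/negPn/negP => ne.
    have key a b : a \in Tr -> b \in Tr -> r a < r b -> L a != L b.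
      move=> ha hb hab; rewrite -val_eqE /= !Lval neq_ltn; apply/orP; left.
      apply: proper_card; apply/properP; split; first exact/Lsub/ltnW.
      exists b; first by rewrite /Lset inE hb leqnn.
      by rewrite /Lset inE hb /= -ltnNge.
    case: (ltngtP (r z1) (r z2)) => h.
    - by move: (key _ _ h1 h2 h); rewrite e eqxx.
    - by move: (key _ _ h2 h1 h); rewrite e eqxx.
    - by rewrite h eqxx in ne.
  rewrite -(card_in_imset inj); apply/subset_leq_card/imsetS.
  by apply/subsetP => z; rewrite !inE => /andP[].
have ru_pred z : 0 < r z -> r (pr z) = (r z).-1.
  move=> h; rewrite rp modn_wrap; last by have := rb z; lia.
  by case: ltnP; have := rb z; lia.
have rw : r (pr z0) = n.-1.
  by rewrite rp rz0 add0n modn_small //; have := rb z0; lia.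
have sub1 x y : c x -> c y -> r x < r y -> L x != L y ->
    exists f, f \in EB /\ seg_meet (p x) (p y) (p f.1) (p f.2).
  move=> cx cy hxy hL.
  have : ~~ (Lset y \subset Lset x).
    apply/negP => hs; move: hL; rewrite -val_eqE /= !Lval.
    by rewrite eqn_leq (subset_leq_card hs) (subset_leq_card (Lsub _ _ (ltnW hxy))).
  case/subsetPn => z; rewrite !inE => /andP[zT zy]; rewrite zT /= -ltnNge => xz.
  move: zT => /andP[cz ncu].
  have ru : r (pr z) = (r z).-1 by apply: ru_pred; lia.
  have ux : r x < r (pr z).
    rewrite ru; have : r x != r (pr z).
      by apply/negP => /eqP /ri ex; rewrite -ex cx in ncu.
    by rewrite ru; lia.
  have uy : r (pr z) < r y by rewrite ru; lia.
  have yw : r y < r (pr z0).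
    rewrite rw; have : r y != r (pr z0).
      by apply/negP => /eqP /ri ex; rewrite -ex cy in ncz0.
    by rewrite rw; have := rb y; lia.
  have := cEB (pr z) (pr z0); rewrite !inE => /(_ ncu ncz0) con.
  have [s [t [est Ps Pt]]] := connect_cut (P := fun t => (r x < r t) && (r t < r y)) con
     ltac:(by rewrite /= ux uy) ltac:(by rewrite /= negb_and; apply/orP; right; rewrite -leqNgt ltnW).
  have [cs ct] : ~~ c s /\ ~~ c t.
    by case/orP: est => /hEB [h1 h2 _]; move: h1 h2; rewrite !inE => -> ->.
  have tx : r t != r x by apply/negP => /eqP /ri e; rewrite e cx in ct.
  have ty : r t != r y by apply/negP => /eqP /ri e; rewrite e cy in ct.
  case/andP: Ps => xs sy.
  have sm : seg_meet (p x) (p y) (p s) (p t).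
    move: Pt; rewrite /= negb_and -!leqNgt => Pt.
    have [yt|ty'] : r y < r t \/ r t < r x by move: Pt tx ty; lia.
    - apply: cross4; apply: rc => //; exact: ltn_trans sy yt.
    - apply/seg_meet_rev2/seg_meet_sym; apply: cross4; apply: rc => //;
        try exact: ltn_trans ty' xs; exact: ltn_trans xs sy.
  case/orP: est => h; first by exists (s, t).
  by exists (t, s); split => //; apply: seg_meet_rev2.
have stepA e : e \in ER -> L e.1 != L e.2 ->
    exists f, f \in EB /\ seg_meet (p e.1) (p e.2) (p f.1) (p f.2).
  move=> eE hL; have [h1 h2 _] := hER e eE; move: h1 h2; rewrite !inE => c1 c2.
  case: (ltngtP (r e.1) (r e.2)) => h; first exact: sub1.
  - have [f [fE sm]] := sub1 _ _ c2 c1 h ltac:(by rewrite eq_sym).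
    by exists f; split => //; apply: seg_meet_rev.
  - by move/ri: h hL => ->; rewrite eqxx.
set S1 := [set e in ER | L e.1 != L e.2].
have stepB : #|L @: [set i | c i]| <= #|S1|.+1.
  apply: grow => //.
  by move=> e /hER [h1 h2 _].
have : forall e, exists f, e \in S1 -> f \in EB /\ seg_meet (p e.1) (p e.2) (p f.1) (p f.2).
  move=> e; case: (boolP (e \in S1)) => h; last by exists e.
  move: h; rewrite inE => /andP[eE hL]; have [f hf] := stepA e eE hL; by exists f.
case/fin_all_exists => g hg.
have stepD : #|S1| <= cr p ER EB.
  rewrite -(card_imset S1 (f := fun e => (e, g e))); last by move=> e1 e2 [].
  apply: subset_leq_card; apply/subsetP => ef /imsetP [e eS ->].
  have [gE sm] := hg e eS.
  move: eS; rewrite !inE /= => /andP[-> _]; rewrite gE /=.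
  exact: asboolT.
apply: (leq_trans stepC); apply: (leq_trans stepB); by rewrite ltnS.
Qed.


Definition tog (n : nat) (a : 'I_n) (c : {ffun 'I_n -> bool}) : {ffun 'I_n -> bool} :=
  [ffun i => if i == a then ~~ c i else c i].

Lemma togK n (a : 'I_n) : involutive (tog a).
Proof. by move=> c; apply/ffunP => i; rewrite !ffunE; case: eqP => //; rewrite negbK. Qed.

Lemma count_pair n (a b : 'I_n) : a != b ->
  4 * #|[set c : {ffun 'I_n -> bool} | c a && ~~ c b]| = 2 ^ n.
Proof.
move=> ab.
pose A (u v : bool) := [set c : {ffun 'I_n -> bool} | (c a == u) && (c b == v)].
have ta c : tog a c a = ~~ c a by rewrite ffunE eqxx.
have tab c : tog a c b = c b by rewrite ffunE eq_sym (negbTE ab).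
have tb c : tog b c b = ~~ c b by rewrite ffunE eqxx.
have tba c : tog b c a = c a by rewrite ffunE (negbTE ab).
have Ea u v : #|A u v| <= #|A (~~ u) v|.
  rewrite -(card_imset _ (can_inj (togK a))); apply: subset_leq_card.
  apply/subsetP => c' /imsetP [c]; rewrite !inE => /andP[/eqP h1 h2] ->.
  by rewrite ta tab h1 eqxx h2.
have Eb u v : #|A u v| <= #|A u (~~ v)|.
  rewrite -(card_imset _ (can_inj (togK b))); apply: subset_leq_card.
  apply/subsetP => c' /imsetP [c]; rewrite !inE => /andP[h1 /eqP h2] ->.
  by rewrite tb tba h2 eqxx h1.
have Ea' u v : #|A u v| = #|A (~~ u) v|.
  by apply/eqP; rewrite eqn_leq Ea /=; have := Ea (~~ u) v; rewrite negbK.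
have Eb' u v : #|A u v| = #|A u (~~ v)|.
  by apply/eqP; rewrite eqn_leq Eb /=; have := Eb u (~~ v); rewrite negbK.
have tot : 2 ^ n = \sum_(u : bool) \sum_(v : bool) #|A u v|.
  have -> : 2 ^ n = #|{ffun 'I_n -> bool}| by rewrite card_ffun card_bool card_ord.
  rewrite -sum1_card.
  have -> : \sum_(c in {ffun 'I_n -> bool}) 1 =
            \sum_(c : {ffun 'I_n -> bool}) \sum_(u : bool) \sum_(v : bool) ((c a == u) && (c b == v) : nat).
    by apply: eq_bigr => c _; rewrite !big_bool /=; case: (c a); case: (c b).
  rewrite exchange_big; apply: eq_bigr => u _; rewrite exchange_big; apply: eq_bigr => v _.
  by rewrite -sum1_card [RHS]big_mkcond /=; apply: eq_bigr => c _; rewrite inE; case: (_ && _).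
have -> : [set c : {ffun 'I_n -> bool} | c a && ~~ c b] = A true false.
  by apply/setP => c; rewrite !inE eqb_id eqbF_neg.
rewrite tot !big_bool /=.
rewrite [#|A false false|]Ea' [#|A true true|]Eb' [#|A false true|]Ea' [#|A true true|]Eb' /=.
lia.
Qed.

Local Open Scope ring_scope.
Unset Implicit Arguments. Set Strict Implicit.

Theorem lemma4 (R : realType) (n : nat) (p : 'I_n -> R * R)
    (T : {set 'I_n} -> {set 'I_n * 'I_n}) :
  injective p -> generic p -> convex_position p ->
  (forall S : {set 'I_n}, is_mst p S (T S)) ->
  n%:R / 4 - 1 <=
    (\sum_(c : {ffun 'I_n -> bool})
        (cr p (T [set i | c i]) (T [set i | ~~ c i]))%:R) / 2 ^+ n :> R.
Proof.
move=> inj [nc _] cp hT.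
case: (ltnP n 2) => hn.
  apply: (@le_trans _ _ 0).
    rewrite subr_le0 ler_pdivrMr // mul1r ler_nat; lia.
  by rewrite divr_ge0 // ?sumr_ge0 // exprn_ge0.
have i0 : 'I_n := Ordinal (leq_trans (isT : (0 < 2)%N) hn).
have [r [pr g]] := setup i0 inj nc cp.
have hc : forall c : {ffun 'I_n -> bool},
    (#|[set z | c z && ~~ c (pr z)]| <= (cr p (T [set i | c i]) (T [set i | ~~ c i])).+1)%N.
  move=> c; case: (set_0Vmem [set z | c z && ~~ c (pr z)]) => [->|[z0 hz0]].
    by rewrite cards0.
  move: hz0; rewrite inE => /andP[cz0 ncz0].
  have [g' r0] := rotate z0 g.
  exact: (main_det g' cz0 ncz0 r0 (hT _).1 (hT _).1).
have prn z : pr z != z.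
  case: g => ri rb rp _; apply/eqP => e.
  have := rp z; rewrite e modn_wrap; last by have := rb z; lia.
  by case: ltnP; have := rb z; lia.
have cnt : (\sum_(c : {ffun 'I_n -> bool}) #|[set z | c z && ~~ c (pr z)]| * 4 = n * 2 ^ n)%N.
  rewrite -big_distrl /= (eq_bigr (fun c : {ffun 'I_n -> bool} => \sum_(z : 'I_n) ((c z && ~~ c (pr z)) : nat))); last first.
    move=> c _; rewrite -sum1_card [LHS]big_mkcond /=; apply: eq_bigr => z _.
    by rewrite inE; case: (_ && _).
  rewrite exchange_big big_distrl /=.
  rewrite (eq_bigr (fun _ => 2 ^ n)%N) ?sum_nat_const ?card_ord //.
  move=> z _; rewrite mulnC -(count_pair (a := z) (b := pr z) ltac:(by rewrite eq_sym prn)); congr (_ * _)%N.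
  by rewrite -sum1_card [RHS]big_mkcond /=; apply: eq_bigr => c _; rewrite inE; case: (_ && _).
have sumle : (\sum_(c : {ffun 'I_n -> bool}) #|[set z | c z && ~~ c (pr z)]| <=
   \sum_(c : {ffun 'I_n -> bool}) cr p (T [set i | c i]) (T [set i | ~~ c i]) + 2 ^ n)%N.
  have H1 : (\sum_(c : {ffun 'I_n -> bool}) #|[set z | c z && ~~ c (pr z)]| <=
     \sum_(c : {ffun 'I_n -> bool}) (cr p (T [set i | c i]) (T [set i | ~~ c i])).+1)%N.
    by apply: leq_sum => c _; exact: hc.
  apply: (leq_trans H1).
  under eq_bigr do rewrite -addn1.
  rewrite big_split /= sum_nat_const card_ffun card_bool card_ord muln1 //.
set S := (\sum_(c : {ffun 'I_n -> bool}) cr p (T [set i | c i]) (T [set i | ~~ c i]))%N in sumle.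
have h : (n * 2 ^ n <= 4 * (S + 2 ^ n))%N.
  by rewrite -cnt -big_distrl /= [X in (_ <= X)%N]mulnC leq_mul2r sumle orbT.
rewrite -natr_sum -/S ler_pdivlMr ?exprn_gt0 //.
move: h; rewrite -(ler_nat R) !natrM natrD !natrX => h.
rewrite mulrBl mul1r mulrAC.
move: h; set Q := n%:R * 2%:R ^+ n; set P := 2%:R ^+ n => h.
lra.
Qed.
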